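(* For every integer $\chi\geq 6$ and every positive integer $N$, there exists a family $\mathcal{F}$ of at least $N$ pairwise non-isomorphic finite graphs such that every $G\in\mathcal{F}$ has chromatic number $\chi$ and no frozen vertices, and $\mathcal{C}_\chi(G)\cong\mathcal{C}_\chi(G')$ for all $G,G'\in\mathcal{F}$.
   Context: All graphs are finite and simple. For a positive integer $k$, a (proper) $k$-colouring of $G$ is a map $c:V(G)\to\{1,\dots,k\}$ with $c(u)\neq c(v)$ for every edge $uv$; $\chi(G)$ is the chromatic number. The $k$-recolouring graph $\mathcal{C}_k(G)$ is the graph whose vertices are all $k$-colourings of $G$, two colourings being adjacent if and only if they differ at exactly one vertex. A vertex $v$ of $G$ is frozen if for every $\chi(G)$-colouring $c$ of $G$, every colour in $\{1,\dots,\chi(G)\}$ appears on the closed neighbourhood of $v$ (so $v$ can never be recoloured); otherwise $v$ is recolourable. *)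

(* Defs.v *)
From mathcomp Require Import all_boot.
Set Implicit Arguments. Unset Strict Implicit. Unset Printing Implicit Defensive.

Record sgraph := SGraph {
  vert : finType;
  adj : rel vert;
  adj_sym : symmetric adj;
  adj_irr : irreflexive adj }.

Definition graph_iso (A B : Type) (ea : A -> A -> Prop) (eb : B -> B -> Prop) :=
  exists f : A -> B, bijective f /\ forall x y, ea x y <-> eb (f x) (f y).

Definition sgraph_iso (G H : sgraph) :=
  graph_iso (fun x y : vert G => adj x y) (fun x y : vert H => adj x y).

(* Proper k-colourings, colours are 'I_k (i.e. {0,...,k-1} ~ {1,...,k}). *)
Definition proper (G : sgraph) (k : nat) (c : {ffun vert G -> 'I_k}) : bool :=
  [forall x, forall y, adj x y ==> (c x != c y)].

Definition colorable (G : sgraph) (k : nat) : Prop :=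
  exists c : {ffun vert G -> 'I_k}, proper c.

Definition chromatic_number (G : sgraph) (k : nat) : Prop :=
  colorable G k /\ forall j, colorable G j -> k <= j.

(* The vertex set of the k-recolouring graph C_k(G). *)
Definition colouring (G : sgraph) (k : nat) :=
  {c : {ffun vert G -> 'I_k} | proper c}.

Definition recol_adj (G : sgraph) (k : nat) (a b : colouring G k) : Prop :=
  #|[set x | val a x != val b x]| = 1.

Definition recol_iso (G H : sgraph) (k : nat) :=
  graph_iso (@recol_adj G k) (@recol_adj H k).

(* v is frozen w.r.t. k-colourings (used with k = chi(G)): every proper
   k-colouring uses every colour on the closed neighbourhood of v. *)
Definition frozen (G : sgraph) (k : nat) (v : vert G) : Prop :=
  forall c : {ffun vert G -> 'I_k}, proper c ->
    forall a : 'I_k, exists u, ((u == v) || adj v u) && (c u == a).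

(* Main.v *)
Require Import Defs.
From mathcomp Require Import all_boot.
From mathcomp Require Import zify.
Set Implicit Arguments. Unset Strict Implicit. Unset Printing Implicit Defensive.

Definition consec (n a b : nat) : bool :=
  (a.+1 == b) || (b.+1 == a) || ((a == 0) && (b == n.-1)) || ((b == 0) && (a == n.-1)).

Definition VV (n N : nat) : finType := ('I_n + option 'I_N)%type.

Definition gadj (n N t : nat) (u v : VV n N) : bool :=
  match u, v with
  | inl a, inl b => (nat_of_ord a != nat_of_ord b) && ~~ consec n a b
  | inl a, inr (Some _) => 4 <= a
  | inr (Some _), inl a => 4 <= a
  | inl a, inr None => ~~ ((5 <= a) && (a <= 8))
  | inr None, inl a => ~~ ((5 <= a) && (a <= 8))
  | inr (Some k), inr None => k < t
  | inr None, inr (Some k) => k < t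
  | _, _ => false
  end.

Lemma gadj_sym n N t : symmetric (@gadj n N t).
Proof.
move=> [a|[k|]] [b|[l|]] //=; rewrite /consec; lia.
Qed.

Lemma gadj_irr n N t : irreflexive (@gadj n N t).
Proof. by move=> [a|[k|]] //=; rewrite eqxx. Qed.

Definition GG n N t := SGraph (@gadj_sym n N t) (@gadj_irr n N t).

Definition cA (n s i : nat) : nat :=
  ((if s <= i then i - s else i + n - s).+1) %/ 2.

Definition cv (n N : nat) (s : nat) (u : VV n N) : nat :=
  match u with
  | inl i => cA n s i
  | inr (Some _) => cA n s 2
  | inr None => cA n s 7
  end.

Definition col (c N s : nat) : {ffun VV (2*c).+1 N -> 'I_c.+1} :=
  [ffun u => inord (cv s u)].

Lemma inord_eq c (a b : nat) : a <= c -> b <= c ->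
  ((inord a : 'I_c.+1) == inord b) = (a == b).
Proof.
move=> ha hb; apply/eqP/eqP => [/(congr1 val)|->//].
by rewrite /= !inordK.
Qed.

Lemma cv_le c N s (u : VV (2*c).+1 N) : 5 <= c -> s < (2*c).+1 -> cv s u <= c.
Proof.
move=> hc hs; case: u => [[i hi]|[k|]] /=; rewrite /cA; case: ifP; lia.
Qed.

Lemma col_proper c N t s : 5 <= c -> s < (2*c).+1 ->
  @Defs.proper (GG (2*c).+1 N t) c.+1 (col c N s).
Proof.
move=> hc hs; apply/forallP => u; apply/forallP => v; apply/implyP => huv.
rewrite !ffunE inord_eq ?cv_le //.
move: huv; case: u => [[a ha]|[k|]] ; case: v => [[b hb]|[l|]] //=;
  rewrite /cA /consec; do ! case: ifP; lia.
Qed.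

Lemma inl_eqE n N (x y : 'I_n) : (inl x == inl y :> VV n N) = (nat_of_ord x == y).
Proof. by apply/eqP/eqP => [[->]|/val_inj->]. Qed.

Lemma nf c N t (v : VV (2*c).+1 N) : 5 <= c -> ~ @frozen (GG (2*c).+1 N t) c.+1 v.
Proof.
move=> hc Hf.
case: v Hf => [[a ha]|[k|]] Hf.
- pose s := if a == 2*c then 0 else a.+1.
  have hs : s < (2*c).+1 by rewrite /s; case: ifP; lia.
  have [u /andP[H1 H2]] := Hf (col c N s) (col_proper _ _ hc hs) (inord 0).
  move: H2; rewrite ffunE inord_eq ?cv_le //.
  case: u H1 => [[b hb]|[l|]] /=; rewrite ?inl_eqE /cA /consec /s /=; (do ! case: ifP); try lia.
- have hs : 2*c < (2*c).+1 by lia.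
  have [u /andP[H1 H2]] := Hf (col c N (2*c)) (col_proper _ _ hc hs) (inord 1).
  move: H2; rewrite ffunE inord_eq ?cv_le //; last lia.
  case: u H1 => [[b hb]|[l|]] /=; try rewrite /cA /=; (do ! case: ifP); try lia.
- have hs : 4 < (2*c).+1 by lia.
  have [u /andP[H1 H2]] := Hf (col c N 4) (col_proper _ _ hc hs) (inord 1).
  move: H2; rewrite ffunE inord_eq ?cv_le //; last lia.
  case: u H1 => [[b hb]|[l|]] /=; try rewrite /cA /=; first [lia | case: ifP => ?; lia].
Qed.

Lemma propP c N t j (f : {ffun VV (2*c).+1 N -> 'I_j}) :
  @Defs.proper (GG (2*c).+1 N t) j f -> forall u v, gadj t u v -> f u != f v.
Proof. by move=> Hp u v h; exact: (implyP (forallP (forallP Hp u) v) h). Qed.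

Lemma fib_le2 c N t j (f : {ffun VV (2*c).+1 N -> 'I_j}) :
  @Defs.proper (GG (2*c).+1 N t) j f -> 2 <= c ->
  forall k, #|[set a : 'I_(2*c).+1 | f (inl a) == k]| <= 2.
Proof.
move=> Hp hc k; rewrite leqNgt; apply/negP => /card_gt2P [x [y [z [[hx hy hz] [nxy nyz nzx]]]]].
rewrite !inE in hx hy hz.
have key : forall a b : 'I_(2*c).+1, f (inl a) == k -> f (inl b) == k ->
    ~~ ((nat_of_ord a != b) && ~~ consec (2*c).+1 a b).
  move=> a b /eqP ha /eqP hb; apply/negP => h.
  by have := propP Hp (u := inl a) (v := inl b) h; rewrite ha hb eqxx.
have := key _ _ hx hy; have := key _ _ hy hz; have := key _ _ hz hx.
move: nxy nyz nzx; rewrite -!val_eqE /= /consec; case: x {hx} => x hx; case: y {hy} => y hy;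
  case: z {hz} => z hz /=; lia.
Qed.

Lemma sum_fib n N j (f : VV n N -> 'I_j) :
  n = \sum_(k < j) #|[set a : 'I_n | f (inl a) == k]|.
Proof.
rewrite -{1}(card_ord n) -sum1_card (partition_big (fun a => f (inl a)) predT) //=.
apply: eq_bigr => k _; rewrite -sum1_card; apply: eq_bigl => a; by rewrite inE.
Qed.

Lemma n_le c N t j (f : {ffun VV (2*c).+1 N -> 'I_j}) :
  @Defs.proper (GG (2*c).+1 N t) j f -> 2 <= c -> (2*c).+1 <= 2 * j.
Proof.
move=> Hp hc; rewrite {1}(sum_fib f).
apply: (leq_trans (n := \sum_(k < j) 2)).
  by apply: leq_sum => k _; exact: fib_le2 Hp hc k.
by rewrite sum_nat_const card_ord mulnC.
Qed.

Lemma all_col c N t (f : {ffun VV (2*c).+1 N -> 'I_c.+1}) :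
  @Defs.proper (GG (2*c).+1 N t) c.+1 f -> 2 <= c ->
  forall al, exists a : 'I_(2*c).+1, f (inl a) == al.
Proof.
move=> Hp hc al; case: (boolP [exists a, f (inl a) == al]) => [/existsP //|/existsPn hn]; exfalso.
have := sum_fib f; rewrite (bigD1 al) //=.
have -> : #|[set a : 'I_(2*c).+1 | f (inl a) == al]| = 0.
  apply/eqP; rewrite cards_eq0; apply/eqP/setP => a; rewrite !inE.
  exact: (negbTE (hn a)).
move=> E.
have : \sum_(k < c.+1 | k != al) #|[set a : 'I_(2*c).+1 | f (inl a) == k]|
        <= \sum_(k < c.+1 | k != al) 2 by apply: leq_sum => k _; exact: fib_le2 Hp hc k.
rewrite add0n in E; rewrite -E (sum_nat_const (predC1 al)) cardC1 card_ord /=; lia.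
Qed.

Lemma forced c N t (f : {ffun VV (2*c).+1 N -> 'I_c.+1}) :
  @Defs.proper (GG (2*c).+1 N t) c.+1 f -> 5 <= c ->
  forall l, f (inr (Some l)) != f (inr None).
Proof.
move=> Hp hc l; have [a /eqP ha] := all_col Hp (ltnW (ltnW (ltnW hc))) (f (inr (Some l))).
have h1 : a < 4.
  rewrite ltnNge; apply/negP => h.
  by have := propP Hp (u := inl a) (v := inr (Some l)) h; rewrite ha eqxx.
apply/negP => /eqP e.
have h2 : gadj t (inl a : VV (2*c).+1 N) (inr None) by rewrite /=; lia.
by have := propP Hp h2; rewrite ha e eqxx.
Qed.

Lemma proper_t c N t t' (f : {ffun VV (2*c).+1 N -> 'I_c.+1}) : 5 <= c ->
  @Defs.proper (GG (2*c).+1 N t) c.+1 f -> @Defs.proper (GG (2*c).+1 N t') c.+1 f.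
Proof.
move=> hc Hp; apply/forallP => u; apply/forallP => v; apply/implyP => h.
have F := forced Hp hc.
move: h; case: u => [a|[k|]]; case: v => [b|[l|]] h;
  try (by apply: (propP Hp); exact: h); by rewrite // ?F // eq_sym F.
Qed.

Lemma iso_card (G H : sgraph) : sgraph_iso G H ->
  #|[set p : vert G * vert G | adj p.1 p.2]| = #|[set p : vert H * vert H | adj p.1 p.2]|.
Proof.
case=> f [[g fK gK] E].
have inj : injective (fun p : vert G * vert G => (f p.1, f p.2)).
  by move=> [a b] [a' b'] /= [/(can_inj fK) -> /(can_inj fK) ->].
rewrite -(card_imset _ inj); congr #|pred_of_set _|.
apply/setP => [[x y]]; rewrite inE /=; apply/imsetP/idP.
  by case=> [[a b]]; rewrite inE /= => h [-> ->]; apply/E.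
move=> h; exists (g x, g y); last by rewrite /= !gK.
by rewrite inE /=; apply/E; rewrite !gK.
Qed.

Lemma ecard_lt n N (t t' : 'I_N) : t < t' ->
  #|[set p : VV n N * VV n N | gadj t p.1 p.2]| < #|[set p : VV n N * VV n N | gadj t' p.1 p.2]|.
Proof.
move=> h; apply: proper_card; apply/properP; split.
  apply/subsetP => [[u v]]; rewrite !inE /=.
  case: u => [a|[k|]]; case: v => [b|[l|]] //=; lia.
exists (inr (Some t), inr None); rewrite !inE /=; lia.
Qed.

Theorem theorem1p4 (chi N : nat) : 6 <= chi -> 0 < N ->
  exists (M : nat) (F : 'I_M -> sgraph),
    N <= M /\
    (forall i j : 'I_M, i != j -> ~ sgraph_iso (F i) (F j)) /\
    (forall i : 'I_M, chromatic_number (F i) chi /\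
                      forall v : vert (F i), ~ frozen chi v) /\
    (forall i j : 'I_M, recol_iso (F i) (F j) chi).
Proof.
case: chi => [//|c] hc hN.
have hc5 : 5 <= c by [].
exists N, (fun i : 'I_N => GG (2*c).+1 N i).
split; first done.
split.
  move=> i j nij /iso_card /= E.
  case: (ltngtP i j) => h.
  - by have := ecard_lt (2*c).+1 h; rewrite E ltnn.
  - by have := ecard_lt (2*c).+1 h; rewrite E ltnn.
  - by move: nij; rewrite (val_inj h) eqxx.
split.
  move=> i; split; last by move=> v; exact: (@nf c N i v hc5).
  split; first by exists (col c N 0); apply: col_proper.
  move=> j [f Hf]; have := n_le Hf; lia.
move=> i j.
have E : forall (t t' : 'I_N) (f : {ffun VV (2*c).+1 N -> 'I_c.+1}),
    @Defs.proper (GG (2*c).+1 N t) c.+1 f -> @Defs.proper (GG (2*c).+1 N t') c.+1 f.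
  by move=> t t' f; apply: proper_t.
exists (fun a => exist _ (val a) (E i j _ (valP a))); split.
  exists (fun b => exist _ (val b) (E j i _ (valP b))) => a; exact: val_inj.
by move=> a b; rewrite /recol_adj /=.
Qed.
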